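(* Let $\Phi:[0,\infty)\to[0,\infty)$ be convex and non-decreasing and let $(\mu_n)$ be a sequence of reals. Assume that, in the setting described in the context, assumptions (A1), (A2), (A3) and (A4) hold, that the function $c(v)$ in (A4) is a constant $c>0$ not depending on $v$, and that $\varphi(n):=\sup_{v\in\mathcal V_n}\varphi_v(n)\to0$ as $n\to\infty$. If, in addition, there exists $b_o>0$ such that $P(V\in\mathcal V_n)\ge b_o$ for all sufficiently large $n$, then for every constant $c_o\in(0,b_oc/8)$ and every sufficiently large $n$, $$E\,\Phi\big(|L(Z)-\mu_n|\big)\ \ge\ \Phi\Big(\frac{\epsilon_o c}{16\,\varphi(n)}\Big)\,c_o .$$
   Context: For each $n$, $Z$ is a random element of a finite set $\mathcal Z_n$ and $L:\mathcal Z_n\to\mathbb R$ is a function (a score). A random transformation $\mathcal R:\mathcal Z_n\to\mathcal Z_n$ is a random map whose randomness is independent of $Z$; for a function $g$, $E[g(\mathcal R(Z))\mid Z]$ denotes expectation over the randomness of $\mathcal R$ only. Let $\mathfrak u:\mathcal Z_n\to\mathbb Z$ and $\mathfrak v:\mathcal Z_n\to\mathbb Z^d$ be functions, $U:=\mathfrak u(Z)$, $V:=\mathfrak v(Z)$. Let $\mathcal S_n,\mathcal S_n^U,\mathcal S_n^V$ denote the supports of the laws of $(U,V)$, $U$, $V$ respectively, and for $v\in\mathcal S_n^V$ let $\mathcal S_n(v):=\{u\in\mathcal S_n^U:(u,v)\in\mathcal S_n\}$. For $(u,v)\in\mathcal S_n$ let $P_{(u,v)}$ be the law of $Z$ conditioned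 on $U=u,V=v$. A ''universal constant'' means one not depending on $n$. Assumptions: (A1) There exist a constant $\epsilon_o>0$ and a sequence $\Delta_n\to0$ such that $P\big(E[L(\mathcal R(Z))-L(Z)\mid Z]\ge\epsilon_o\big)\ge1-\Delta_n$. (A2) There is a constant $A<\infty$ with $L(\mathcal R(Z))-L(Z)\ge -A$ always. (A3) There exist sets $\mathcal V_n\subset\mathcal S_n^V$ and, for $v\in\mathcal V_n$, sets of consecutive integers $\mathcal U_n(v)=\{u_n(v)+1,\dots,u_n(v)+m_n(v)\}\subset\mathcal S_n(v)$ such that for every $v\in\mathcal V_n$ and $u\in\mathcal U_n(v)$: if $Z\sim P_{(u,v)}$ then $\mathcal R(Z)\sim P_{(u+1,v)}$. (A4) There exist $n_1>0$ and a function $c(v)>0$ (not depending on $n$) such that for every $n\ge n_1$ and every $v\in\mathcal V_n$, $m_n(v)\ge c(v)\varphi_v(n)^{-1}$, where $\varphi_v(n)>0$ satisfies $\min_{u\in\mathcal U_n(v)}P(U=u\mid V=v)\ge\varphi_v(n)$. *)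

(* Defs.v *)
From HB Require Import structures.
From mathcomp Require Export all_boot all_order all_algebra.
From mathcomp Require Export all_classical all_reals all_analysis.
Set Implicit Arguments. Unset Strict Implicit. Unset Printing Implicit Defensive.
Import Order.TTheory GRing.Theory Num.Theory.
Local Open Scope ring_scope.

Section Defs.
Context {R : realType} {T : finType}.

Definition is_pmf (P : T -> R) : Prop :=
  (forall z, 0 <= P z) /\ \sum_z P z = 1.

Definition Pr (P : T -> R) (A : pred T) : R := \sum_(z | A z) P z.

Definition Exp (P : T -> R) (g : T -> R) : R := \sum_z P z * g z.

(* Law of Z conditioned on the event {w(Z)} (Pr P w > 0 assumed when used). *)
Definition condlaw (P : T -> R) (w : pred T) (z : T) : R :=
  P z * (w z)%:R / Pr P w.

(* The random transformation is a random map T -> T, i.e. a random element of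
   the finite type {ffun T -> T}, with law Q, independent of Z.
   E[g(R(Z)) | Z = z] : *)
Definition condE_R (Q : {ffun T -> T} -> R) (g : T -> R) (z : T) : R :=
  \sum_f Q f * g (f z).

(* law of R(Z) when Z ~ Pz and R ~ Q independently *)
Definition pushR (Q : {ffun T -> T} -> R) (Pz : T -> R) (z' : T) : R :=
  \sum_z \sum_f Pz z * Q f * (f z == z')%:R.

End Defs.

Definition convex_nonneg {R : realType} (Phi : R -> R) : Prop :=
  forall x y t, 0 <= x -> 0 <= y -> 0 <= t <= 1 ->
    Phi (t * x + (1 - t) * y) <= t * Phi x + (1 - t) * Phi y.

Definition nondecr_nonneg {R : realType} (Phi : R -> R) : Prop :=
  forall x y, 0 <= x -> x <= y -> Phi x <= Phi y.

(* Main.v *)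
Require Import Defs.
From HB Require Import structures.
From mathcomp Require Import all_boot all_order all_algebra.
From mathcomp Require Import all_classical all_reals all_analysis.
From mathcomp Require Import lra ring zify.
Import Order.TTheory GRing.Theory Num.Theory.
Local Open Scope ring_scope.
Local Open Scope classical_set_scope.

Section Gen.
Variable R : realType.
Variables (Phi : R -> R) (mu : R).
Hypothesis hPhi0 : forall x, 0 <= x -> 0 <= Phi x.
Hypothesis hPhiconv : convex_nonneg Phi.
Hypothesis hPhimono : nondecr_nonneg Phi.
Let G x := Phi `|x - mu|.

Lemma G_ge0 x : 0 <= G x.
Proof. by apply: hPhi0. Qed.

Lemma G_conv x y t : 0 <= t <= 1 -> G (t * x + (1 - t) * y) <= t * G x + (1 - t) * G y.
Proof.
move=> /andP[t0 t1]; rewrite /G.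
have H := hPhiconv _ _ t (normr_ge0 (x - mu)) (normr_ge0 (y - mu)).
rewrite t0 t1 /= in H; apply: le_trans (H isT).
apply: hPhimono => //.
have -> : t * x + (1 - t) * y - mu = t * (x - mu) + (1 - t) * (y - mu) by ring.
apply: (le_trans (ler_normD _ _)).
rewrite !normrM (ger0_norm t0) (ger0_norm (_ : 0 <= 1 - t)) //; lra.
Qed.

Lemma jensen_seq (I : eqType) (s : seq I) (w f : I -> R) :
  (forall i, 0 <= w i) ->
  (\sum_(i <- s) w i) * G ((\sum_(i <- s) w i * f i) / \sum_(i <- s) w i)
  <= \sum_(i <- s) w i * G (f i).
Proof.
move=> w0; elim: s => [|a s IH]; first by rewrite !big_nil mul0r.
rewrite !big_cons.
set W' := \sum_(i <- s) w i; set S' := \sum_(i <- s) w i * f i.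
set Sg := \sum_(i <- s) w i * G (f i).
have W'0 : 0 <= W' by apply: sumr_ge0.
have Sg0 : 0 <= Sg by apply: sumr_ge0 => i _; apply: mulr_ge0 => //; apply: G_ge0.
have wa0 := w0 a.
have Ga0 := G_ge0 (f a).
have [W'z|W'p] := eqVneq W' 0.
  have S'z : S' = 0.
    move: W'z; rewrite /W' => /eqP; rewrite psumr_eq0 // => /allP H.
    rewrite /S'; rewrite big_seq big1 // => i /H /eqP ->; by rewrite mul0r.
  rewrite W'z S'z !addr0.
  have [->|wap] := eqVneq (w a) 0; first by rewrite !mul0r add0r.
  rewrite mulrAC divff // mul1r. lra.
have W'pos : 0 < W' by rewrite lt_def W'p W'0.
have Wpos : 0 < w a + W' by lra.
set t := w a / (w a + W').
have t01 : 0 <= t <= 1.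
  apply/andP; split; first by apply: divr_ge0 => //; lra.
  by rewrite ler_pdivrMr // mul1r; lra.
have -> : (w a * f a + S') / (w a + W') = t * f a + (1 - t) * (S' / W').
  rewrite /t; field. rewrite W'p /=; apply: lt0r_neq0; lra.
have HH := ler_wpM2l (ltW Wpos) (G_conv (f a) (S' / W') t t01). apply: (le_trans HH).
have -> : (w a + W') * (t * G (f a) + (1 - t) * G (S' / W')) = w a * G (f a) + W' * G (S' / W').
  rewrite /t; field; apply: lt0r_neq0; lra.
by rewrite lerD2l.
Qed.

Lemma jensen_fin (T : finType) (w f : T -> R) :
  (forall i, 0 <= w i) -> \sum_i w i = 1 ->
  G (\sum_i w i * f i) <= \sum_i w i * G (f i).
Proof.
move=> w0 w1; have := (@jensen_seq T (index_enum T) w f w0).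
by rewrite w1 divr1 mul1r.
Qed.
End Gen.

Lemma avg_id (R : realType) (T : finType) (K : eqType) (P h : T -> R) (kk : T -> K) :
  (forall z, 0 <= P z) ->
  \sum_z P z * h z = \sum_z P z * ((\sum_(z' | kk z' == kk z) P z' * h z') / \sum_(z' | kk z' == kk z) P z').
Proof.
move=> P0.
set q := fun k => \sum_(z' | kk z' == k) P z'.
have -> : \sum_z P z * ((\sum_(z' | kk z' == kk z) P z' * h z') / \sum_(z' | kk z' == kk z) P z')
   = \sum_z \sum_z' (if kk z' == kk z then P z * (P z' * h z' / q (kk z')) else 0).
  apply: eq_bigr => z _; rewrite mulr_suml mulr_sumr big_mkcond /=.
  apply: eq_bigr => z' _; case: ifP => // /eqP ->; by rewrite /q.
rewrite exchange_big /=; apply: eq_bigr => z' _.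
have -> : \sum_z (if kk z' == kk z then P z * (P z' * h z' / q (kk z')) else 0)
    = q (kk z') * (P z' * h z' / q (kk z')).
  have -> : q (kk z') = \sum_z (if kk z == kk z' then P z else 0) by rewrite /q big_mkcond.
  rewrite mulr_suml; apply: eq_bigr => z _.
  by rewrite eq_sym; case: ifP => _; rewrite ?mul0r.
have [q0|qn0] := eqVneq (q (kk z')) 0.
  have Pz : P z' = 0.
    by move: q0; rewrite /q => /eqP; rewrite psumr_eq0 // => /allP/(_ z' (mem_index_enum _)); rewrite eqxx /= => /eqP.
  by rewrite Pz !mul0r q0 mul0r.
by field.
Qed.

Section Cond.
Variables (R : realType) (T : finType).

Lemma Pr_ind (P : T -> R) (w : pred T) : Pr P w = \sum_z P z * (w z)%:R.
Proof. by rewrite /Pr big_mkcond /=; apply: eq_bigr => z _; case: (w z); rewrite ?mulr1 ?mulr0. Qed.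

Lemma Pr_ge0 (P : T -> R) (w : pred T) : (forall z, 0 <= P z) -> 0 <= Pr P w.
Proof. by move=> P0; apply: sumr_ge0. Qed.

Lemma Pr_mono (P : T -> R) (w1 w2 : pred T) : (forall z, 0 <= P z) ->
  (forall z, w1 z -> w2 z) -> Pr P w1 <= Pr P w2.
Proof.
move=> P0 H; rewrite !Pr_ind; apply: ler_sum => z _.
apply: ler_wpM2l => //; case E: (w1 z); first by rewrite (H _ E).
by case: (w2 z).
Qed.

Lemma condlaw_ge0 (P : T -> R) w z : (forall z, 0 <= P z) -> 0 <= condlaw P w z.
Proof. move=> P0; rewrite /condlaw; apply: divr_ge0; [apply: mulr_ge0|apply: Pr_ge0] => //. Qed.

Lemma condlaw_mul (P : T -> R) w z : Pr P w != 0 -> Pr P w * condlaw P w z = P z * (w z)%:R.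
Proof. by move=> H; rewrite /condlaw mulrCA divff // mulr1. Qed.

Lemma condlaw_sum1 (P : T -> R) w : Pr P w != 0 -> \sum_z condlaw P w z = 1.
Proof. by move=> H; rewrite /condlaw -mulr_suml -Pr_ind divff. Qed.

Lemma condlaw_pos (P : T -> R) w z : (forall z, 0 <= P z) -> condlaw P w z != 0 -> 0 < P z.
Proof.
move=> P0; rewrite /condlaw lt_def P0 andbT; apply: contra => /eqP ->; by rewrite !mul0r.
Qed.

Lemma condlaw_wsum (P : T -> R) w (h : T -> R) : Pr P w != 0 ->
  Pr P w * \sum_z condlaw P w z * h z = \sum_z P z * (w z)%:R * h z.
Proof. by move=> H; rewrite mulr_sumr; apply: eq_bigr => z _; rewrite mulrA condlaw_mul. Qed.

Lemma pushR_exp (Q : {ffun T -> T} -> R) (Pz : T -> R) (g : T -> R) :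
  \sum_z' pushR Q Pz z' * g z' = \sum_z Pz z * condE_R Q g z.
Proof.
rewrite /pushR /condE_R.
have -> : \sum_z' (\sum_z \sum_f Pz z * Q f * (f z == z')%:R) * g z'
   = \sum_z' \sum_z \sum_f Pz z * Q f * (f z == z')%:R * g z'.
  by apply: eq_bigr => z' _; rewrite mulr_suml; apply: eq_bigr => z _; rewrite mulr_suml.
rewrite exchange_big /=; apply: eq_bigr => z _.
rewrite exchange_big /= mulr_sumr; apply: eq_bigr => f _.
rewrite (bigD1 (f z)) //= eqxx mulr1 big1 ?addr0 ?mulrA //.
by move=> z' /negbTE; rewrite eq_sym => ->; rewrite mulr0 mul0r.
Qed.

Lemma g_lb (P : T -> R) (Q : {ffun T -> T} -> R) (L : T -> R) (A : R) z :
  is_pmf Q -> (forall f, 0 < P z -> 0 < Q f -> - A <= L (f z) - L z) -> 0 < P z ->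
  - A <= condE_R Q L z - L z.
Proof.
move=> [Q0 Q1] H Pz.
have -> : condE_R Q L z - L z = \sum_f Q f * (L (f z) - L z).
  by rewrite /condE_R -[X in _ - X]mul1r -Q1 mulr_suml -sumrB; apply: eq_bigr => f _; rewrite mulrBr.
have -> : - A = \sum_f Q f * (- A) by rewrite -mulr_suml Q1 mul1r.
apply: ler_sum => f _.
have [->|Qf] := eqVneq (Q f) 0; first by rewrite !mul0r.
apply: ler_wpM2l => //; apply: H => //; by rewrite lt_def Qf Q0.
Qed.

Lemma sum_excl (n : nat) (p : nat -> bool) :
  (forall i j, p i -> p j -> i = j) -> \sum_(0 <= j < n) ((p j)%:R : R) <= 1.
Proof.
move=> H; elim: n => [|n IH]; first by rewrite big_geq.
rewrite big_nat_recr //=.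
case E: (p n); last by rewrite addr0.
rewrite big1_seq; first by rewrite add0r.
move=> j; rewrite mem_index_iota => /andP[_ jn].
case F: (p j); last by [].
have nj := H _ _ E F; subst n; by rewrite ltnn in jn.
Qed.
End Cond.



Section Arith.
Context {R : realType}.
Lemma ar_kph {c ph m k : R} : 0 < ph -> c <= m * ph -> m <= 4 * k -> c / 4 <= k * ph.
Proof. move=> h0 h1 h2; have h3 : m * ph <= 4 * k * ph by apply: ler_wpM2r; lra. lra. Qed.

Lemma ar_Kk {K eps0 c ph k : R} : 0 < eps0 -> 0 < ph -> K <= eps0 * c / (16 * ph) ->
  c / 4 <= k * ph -> K <= k * eps0 / 4.
Proof.
move=> he hp hK hk; apply: (le_trans hK); rewrite ler_pdivrMr; last by lra.
have h1 : eps0 * c <= eps0 * (4 * (k * ph)) by apply: ler_wpM2l; lra.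
have -> : k * eps0 / 4 * (16 * ph) = eps0 * (4 * (k * ph)) by field.
exact: h1.
Qed.

Lemma ar_diff {x y z d : R} : x - y <= d -> y <= z -> z <= x / 2 -> x / 2 <= d.
Proof. lra. Qed.

Lemma ar_tri {d N1 N2 x K : R} : d <= N1 + N2 -> x / 2 <= d -> K <= x / 4 -> N2 < K -> K <= N1.
Proof. lra. Qed.

Lemma ar_pairL {s pa Ga PK t : R} : 0 <= s -> 0 <= PK -> s <= pa -> PK <= Ga -> 0 <= t ->
  s * PK <= pa * Ga + t.
Proof. move=> h1 h2 h3 h4 h5; have := ler_pM h1 h2 h3 h4; lra. Qed.

Lemma ar_pairR {s pa Ga PK t : R} : 0 <= s -> 0 <= PK -> s <= pa -> PK <= Ga -> 0 <= t ->
  s * PK <= t + pa * Ga.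
Proof. move=> h1 h2 h3 h4 h5; have := ler_pM h1 h2 h3 h4; lra. Qed.

Lemma ar_e1 {a q y : R} : 0 <= a -> 0 <= y -> a * (q - y) <= a * q.
Proof. move=> h1 h2; apply: ler_wpM2l => //; lra. Qed.

Lemma ar_e2 {c PK q k ph : R} : 0 <= PK -> 0 <= q -> c / 4 <= k * ph ->
  c / 4 * PK * q <= k * (ph * q * PK).
Proof.
move=> h1 h2 h3; have h0 : 0 <= q * PK by apply: mulr_ge0.
have := ler_wpM2r h0 h3.
have -> : c / 4 * PK * q = c / 4 * (q * PK) by ring.
have -> : k * (ph * q * PK) = k * ph * (q * PK) by ring.
done.
Qed.

Lemma ar_bad {eps0 A c ph q k Bs bb : R} : 0 < eps0 -> 0 <= A -> 0 < c -> 0 < ph -> 0 <= q ->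
  ph * q * Bs <= bb -> k * eps0 / 2 < (eps0 + A) * Bs -> c / 4 <= k * ph ->
  q <= 8 * (eps0 + A) / (eps0 * c) * bb.
Proof.
move=> he hA hc hp hq h1 h2 h3.
have epsc : 0 < eps0 * c by apply: mulr_gt0.
have M0 : 0 <= 8 * (eps0 + A) / (eps0 * c) by apply: divr_ge0; [lra|exact: ltW].
have s1 : 8 * (eps0 + A) / (eps0 * c) * (ph * q * Bs) <= 8 * (eps0 + A) / (eps0 * c) * bb.
  by apply: ler_wpM2l.
apply: le_trans s1.
have -> : 8 * (eps0 + A) / (eps0 * c) * (ph * q * Bs) = 8 * ph * q * ((eps0 + A) * Bs) / (eps0 * c).
  by field; apply/andP; split; apply: lt0r_neq0.
rewrite ler_pdivlMr //.
have phq0 : 0 <= 8 * ph * q by apply: mulr_ge0; [lra|lra].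
have := ler_wpM2l phq0 (ltW h2).
have : q * (eps0 * c) <= 8 * ph * q * (k * eps0 / 2).
  have -> : 8 * ph * q * (k * eps0 / 2) = q * eps0 * (4 * (k * ph)) by field.
  rewrite mulrA; apply: ler_wpM2l; first by apply: mulr_ge0; lra.
  lra.
lra.
Qed.

Lemma ar_final {a q y AA : R} : 0 <= a -> q <= y -> 0 <= AA -> a * (q - y) <= AA.
Proof.
move=> h1 h2 h3; have : a * (q - y) <= 0 by apply: mulr_ge0_le0 => //; lra.
lra.
Qed.

Lemma ar_Kdiv {x a b : R} : 0 <= x -> 0 < b -> b <= a -> x / (16 * a) <= x / (16 * b).
Proof. move=> x0 b0 ba; apply: ler_wpM2l => //; rewrite lef_pV2 ?posrE; lra. Qed.

Lemma ar_step3 {q a AA M bb : R} : 0 < q -> a * (q - M * bb) <= AA -> a * (1 - M * (bb / q)) <= AA / q.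
Proof.
move=> q0 H; rewrite ler_pdivlMr //.
have -> : a * (1 - M * (bb / q)) * q = a * (q - M * bb) by field; apply: lt0r_neq0.
exact: H.
Qed.

Lemma ar_concl {co c PK Pr b0 M X D E : R} : 0 <= PK -> 0 <= M -> 0 < c -> X <= D -> b0 <= Pr ->
  co <= c / 4 * (b0 - M * D) -> c / 4 * PK * (Pr - M * X) <= E -> PK * co <= E.
Proof.
move=> PK0 M0 c0 XD bP hco hE.
have h0 : M * X <= M * D by apply: ler_wpM2l.
have h1 : b0 - M * D <= Pr - M * X by lra.
have a0 : 0 <= c / 4 * PK by apply: mulr_ge0; lra.
have h2 := ler_wpM2l a0 h1.
have h3 := ler_wpM2l PK0 hco.
rewrite (_ : c / 4 * PK * (b0 - M * D) = PK * (c / 4 * (b0 - M * D))) in h2; last by ring.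
lra.
Qed.

Lemma ar_delta {co b0 c M D : R} : 0 < c -> 0 < M -> D <= (b0 - 4 * co / c) / M ->
  co <= c / 4 * (b0 - M * D).
Proof.
move=> c0 M0 hD.
have h1 : M * D <= b0 - 4 * co / c by rewrite mulrC -ler_pdivlMr.
have h2 : 4 * co / c <= b0 - M * D by lra.
have h3 := ler_wpM2l (_ : 0 <= c / 4) h2.
rewrite (_ : c / 4 * (4 * co / c) = co) in h3; last by field; apply: lt0r_neq0.
apply: h3; lra.
Qed.

Lemma ar_delta_pos {co b0 c M : R} : 0 < c -> 0 < M -> 0 < co < b0 * c / 8 -> 0 < (b0 - 4 * co / c) / M.
Proof.
move=> c0 M0 /andP[h1 h2]; apply: divr_gt0 => //.
rewrite subr_gt0 ltr_pdivrMr //.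
have : 0 < b0 * c by lra.
lra.
Qed.
End Arith.


Section Fiber.
Variables (R : realType) (T : finType) (V : eqType).
Variables (P : T -> R) (Q : {ffun T -> T} -> R) (L : T -> R) (uu : T -> int) (vv : T -> V).
Hypotheses (hP : is_pmf P) (hQ : is_pmf Q).
Variables (Phi : R -> R) (mu : R).
Hypothesis hPhi0 : forall x, 0 <= x -> 0 <= Phi x.
Hypothesis hPhiconv : convex_nonneg Phi.
Hypothesis hPhimono : nondecr_nonneg Phi.
Variables (eps0 A : R).
Hypotheses (heps0 : 0 < eps0) (hA0 : 0 <= A).
Hypothesis hA2 : forall z f, 0 < P z -> 0 < Q f -> - A <= L (f z) - L z.
Variables (v : V) (u0 : int) (m : nat).
Let C (u : int) := fun z => (uu z == u) && (vv z == v).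
Hypothesis hUn : forall u : int, u0 < u <= u0 + m%:Z -> 0 < Pr P (C u).
Hypothesis hA3 : forall u : int, u0 < u <= u0 + m%:Z ->
   forall z', pushR Q (condlaw P (C u)) z' = condlaw P (C (u + 1)) z'.
Variables (c ph : R).
Hypotheses (hc : 0 < c) (hph : 0 < ph) (hphc : ph <= c / 2).
Hypothesis hphu : forall u : int, u0 < u <= u0 + m%:Z ->
   ph <= Pr P (C u) / Pr P (fun z => vv z == v).
Hypothesis hm : c / ph <= m%:R.

Let bad z := ~~ (eps0 <= condE_R Q L z - L z).
Let G x := Phi `|x - mu|.
Let Cj (j : nat) := C (u0 + 1 + j%:Z).
Let pi j := Pr P (Cj j).
Let ell j := \sum_z condlaw P (Cj j) z * L z.
Let beta j := \sum_z condlaw P (Cj j) z * (bad z)%:R.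
Let q := Pr P (fun z => vv z == v).

Let P0 : forall z, 0 <= P z. Proof. by case: hP. Qed.

Let rng j : (j < m)%N -> u0 < u0 + 1 + j%:Z <= u0 + m%:Z.
Proof. move=> jm; apply/andP; split; lia. Qed.

Let pi_pos j : (j < m)%N -> 0 < pi j.
Proof. by move=> /rng; apply: hUn. Qed.

Let pi_le_q j : pi j <= q.
Proof. by apply: Pr_mono => // z /andP[]. Qed.

Let m_ge2 : (2 <= m)%N.
Proof.
have h0 := hphc; rewrite ler_pdivlMr // in h0.
have h1 : 2 <= c / ph by rewrite ler_pdivlMr //; lra.
have : (2%:R : R) <= m%:R by apply: le_trans h1 hm.
by rewrite ler_nat.
Qed.

Let q_pos : 0 < q.
Proof. apply: lt_le_trans (pi_le_q 0); apply: pi_pos; by apply: leq_trans m_ge2. Qed.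

Let phq_le_pi j : (j < m)%N -> ph * q <= pi j.
Proof. by move=> /rng /hphu; rewrite ler_pdivlMr. Qed.

Let beta_ge0 j : 0 <= beta j.
Proof. apply: sumr_ge0 => z _; apply: mulr_ge0; [exact: condlaw_ge0|by case: (bad z)]. Qed.

Let step j : (j < m)%N -> eps0 - (eps0 + A) * beta j <= ell j.+1 - ell j.
Proof.
move=> jm.
have pin : Pr P (Cj j) != 0 by apply: lt0r_neq0; apply: pi_pos.
have eCj : Cj j.+1 = C (u0 + 1 + j%:Z + 1).
  by rewrite /Cj; congr C; lia.
have -> : ell j.+1 = \sum_z condlaw P (Cj j) z * condE_R Q L z.
  rewrite /ell eCj -pushR_exp; apply: eq_bigr => z _; by rewrite hA3 //; apply: rng.
rewrite /ell -sumrB.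
have -> : eps0 - (eps0 + A) * beta j = \sum_z condlaw P (Cj j) z * (eps0 - (eps0 + A) * (bad z)%:R).
  rewrite (eq_bigr (fun z => condlaw P (Cj j) z * eps0 - (eps0 + A) * (condlaw P (Cj j) z * (bad z)%:R))); last by move=> z _; ring.
  by rewrite sumrB -mulr_suml -mulr_sumr condlaw_sum1 // mul1r.
apply: ler_sum => z _; rewrite -mulrBr.
have [->|cn] := eqVneq (condlaw P (Cj j) z) 0; first by rewrite !mul0r.
apply: ler_wpM2l; first exact: condlaw_ge0.
have Pz := @condlaw_pos R T P _ z P0 cn.
rewrite /bad; case E: (eps0 <= _) => /=.
  by rewrite mulr0 subr0.
rewrite mulr1 opprD addrA subrr add0r.
exact: (@g_lb R T P Q L A z hQ (fun f => hA2 z f) Pz).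
Qed.

Let window k i : (i + k <= m)%N ->
  k%:R * eps0 - (eps0 + A) * \sum_(i <= j < i + k) beta j <= ell (i + k) - ell i.
Proof.
elim: k => [|k IH] H.
  by rewrite addn0 big_geq // mulr0 subrr mul0r subr0.
have H1 : (i + k <= m)%N by lia.
have H2 : (i + k < m)%N by lia.
rewrite addnS big_nat_recr /=; last by lia.
have := step _ H2; have := IH H1.
rewrite -[k.+1]addn1 natrD; lra.
Qed.

Let window_B k i : (i + k <= m)%N ->
  \sum_(i <= j < i + k) beta j <= \sum_(0 <= j < m) beta j.
Proof.
move=> H.
rewrite [X in _ <= X](big_cat_nat (n := i)) //=; last by lia.
rewrite [X in _ <= _ + X](big_cat_nat (n := i + k)) //=; last by lia.
have h1 : 0 <= \sum_(0 <= j < i) beta j by apply: sumr_ge0.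
have h2 : 0 <= \sum_(i + k <= j < m) beta j by apply: sumr_ge0.
lra.
Qed.

Let cellsum (h : T -> R) n' : (forall z, 0 <= h z) ->
  \sum_(0 <= j < n') \sum_z P z * (Cj j z)%:R * h z <= \sum_(z | vv z == v) P z * h z.
Proof.
move=> h0; rewrite exchange_big /= [X in _ <= X]big_mkcond /=.
apply: ler_sum => z _.
have -> : \sum_(0 <= j < n') P z * (Cj j z)%:R * h z = P z * h z * \sum_(0 <= j < n') (Cj j z)%:R.
  by rewrite mulr_sumr; apply: eq_bigr => j _; rewrite mulrAC.
have Ph : 0 <= P z * h z by apply: mulr_ge0.
case E: (vv z == v).
  rewrite -[X in _ <= X]mulr1; apply: ler_wpM2l => //.
  apply: sum_excl => i j; rewrite /Cj /C E !andbT => /eqP Hi /eqP Hj.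
  rewrite Hi in Hj; lia.
rewrite big1 ?mulr0 // => j _; by rewrite /Cj /C E andbF.
Qed.

Let lower_A n' : (n' <= m)%N ->
  \sum_(0 <= j < n') pi j * G (ell j) <= \sum_(z | vv z == v) P z * G (L z).
Proof.
move=> nm; apply: le_trans (cellsum _ n' _); last by move=> z; apply: hPhi0.
apply: ler_sum_nat => j /andP[_ jn].
have pin : Pr P (Cj j) != 0 by apply: lt0r_neq0; apply: pi_pos; lia.
rewrite -condlaw_wsum //; apply: ler_wpM2l; first by apply: ltW; apply: pi_pos; lia.
apply: (@jensen_fin R Phi mu hPhi0 hPhiconv hPhimono T (condlaw P (Cj j)) L).
  by move=> z; apply: condlaw_ge0.
exact: condlaw_sum1.
Qed.

Let beta_bound :
  ph * q * \sum_(0 <= j < m) beta j <= \sum_(z | vv z == v) P z * (bad z)%:R.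
Proof.
apply: le_trans (cellsum _ m _); last by move=> z; case: (bad z).
rewrite mulr_sumr; apply: ler_sum_nat => j /andP[_ jn].
have pin : Pr P (Cj j) != 0 by apply: lt0r_neq0; apply: pi_pos.
rewrite -condlaw_wsum //; apply: ler_wpM2r; first exact: beta_ge0.
exact: phq_le_pi.
Qed.

Lemma fiber (K : R) : 0 <= K -> K <= eps0 * c / (16 * ph) ->
  c / 4 * Phi K * (q - 8 * (eps0 + A) / (eps0 * c) * \sum_(z | vv z == v) P z * (bad z)%:R)
  <= \sum_(z | vv z == v) P z * Phi `|L z - mu|.
Proof.
move=> hK0 hK.
set k := m./2.
have hkk : (k + k <= m)%N by have := odd_double_half m; rewrite -addnn -/k; lia.
have hk4 : (m <= 4 * k)%N by have := odd_double_half m; rewrite -addnn -/k; have := leq_b1 (odd m); lia.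
have hk4r : (m%:R : R) <= 4 * k%:R by rewrite -(natrM R 4 k) ler_nat.
have cm : c <= m%:R * ph by rewrite -ler_pdivrMr.
have bB := beta_bound.
have wBg : forall i, (i + k <= m)%N -> \sum_(i <= j < i + k) beta j <= \sum_(0 <= j < m) beta j.
  by move=> i; apply: window_B.
have hA := lower_A _ hkk. rewrite /G in hA.
set Bsum := \sum_(0 <= j < m) beta j in bB wBg *.
set bb := \sum_(z | vv z == v) P z * (bad z)%:R in bB *.
set AA := \sum_(z | vv z == v) P z * Phi `|L z - mu| in hA *.
have Bsum0 : 0 <= Bsum by apply: sumr_ge0 => j _.
have AA0 : 0 <= AA by apply: sumr_ge0 => z _; apply: mulr_ge0 => //; apply: hPhi0.
have bb0 : 0 <= bb by apply: sumr_ge0 => z _; apply: mulr_ge0 => //; case: (bad z).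
have PK0 : 0 <= Phi K by apply: hPhi0.
have c40 : 0 <= c / 4 by apply: divr_ge0; [exact: ltW|].
have kph : c / 4 <= k%:R * ph by exact: (ar_kph hph cm hk4r).
have a0 : 0 <= c / 4 * Phi K by apply: mulr_ge0.
have qq0 : 0 <= q by exact: ltW.
have phq0 : 0 <= ph * q by apply: mulr_ge0; exact: ltW.
case: (leP ((eps0 + A) * Bsum) (k%:R * eps0 / 2)) => HB.
-
  have Kk : K <= k%:R * eps0 / 4 by apply: (ar_Kk (c := c) (ph := ph)).
  have pair i : (i < k)%N -> ph * q * Phi K <= pi i * G (ell i) + pi (i + k)%N * G (ell (i + k)%N).
    move=> ik.
    have ikk : (i + k < k + k)%N by rewrite ltn_add2r.
    have ikm' : (i + k < m)%N by exact: leq_trans ikk hkk.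
    have ikm : (i + k <= m)%N by exact: ltnW.
    have im : (i < m)%N by apply: leq_trans ik (leq_trans (leq_addr k k) hkk).
    have w := window k i ikm.
    have wB := wBg i ikm.
    have eA : 0 <= eps0 + A by apply: addr_ge0; [exact: ltW|].
    have wB2 : (eps0 + A) * \sum_(i <= j < i + k) beta j <= (eps0 + A) * Bsum by apply: ler_wpM2l.
    have diff := ar_diff w wB2 HB.
    have pi1 : ph * q <= pi i by apply: phq_le_pi.
    have pi2 : ph * q <= pi (i + k)%N by apply: phq_le_pi.
    have G1 := @G_ge0 R Phi mu hPhi0 (ell i).
    have G2 := @G_ge0 R Phi mu hPhi0 (ell (i + k)%N).
    have t1 : 0 <= pi i * G (ell i) by apply: mulr_ge0 => //; apply: le_trans pi1.
    have t2 : 0 <= pi (i + k)%N * G (ell (i + k)%N) by apply: mulr_ge0 => //; apply: le_trans pi2.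
    have tri : ell (i + k)%N - ell i <= `|ell (i + k)%N - mu| + `|ell i - mu|.
      have := ler_normD (ell (i + k)%N - mu) (mu - ell i).
      rewrite (distrC mu). have -> : ell (i + k)%N - mu + (mu - ell i) = ell (i + k)%N - ell i by ring.
      move=> h; apply: le_trans h; exact: ler_norm.
    have [h|h] := leP K `|ell i - mu|.
      have hG : Phi K <= G (ell i) by apply: hPhimono.
      exact: ar_pairL.
    have h' := ar_tri tri diff Kk h.
    have hG : Phi K <= G (ell (i + k)%N) by apply: hPhimono.
    exact: ar_pairR.
  have sum2 : \sum_(0 <= j < k + k) pi j * G (ell j)
      = \sum_(0 <= i < k) (pi i * G (ell i) + pi (i + k)%N * G (ell (i + k)%N)).
    rewrite big_split /= (big_cat_nat (n := k)) //=; last exact: leq_addr.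
    congr (_ + _).
    rewrite -{1}(add0n k) big_addn addnK.
    by [].
  have hsum : k%:R * (ph * q * Phi K) <= \sum_(0 <= j < k + k) pi j * G (ell j).
    rewrite sum2.
    have H : \sum_(0 <= i < k) (ph * q * Phi K) <= \sum_(0 <= i < k) (pi i * G (ell i) + pi (i + k)%N * G (ell (i + k)%N)).
      by apply: ler_sum_nat => i /andP[_ ik]; exact: pair.
    rewrite sumr_const_nat subn0 -mulr_natl in H; exact: H.
  have e1 : c / 4 * Phi K * (q - 8 * (eps0 + A) / (eps0 * c) * bb) <= c / 4 * Phi K * q.
    apply: ar_e1 => //; apply: mulr_ge0 => //; apply: divr_ge0.
      by apply: mulr_ge0 => //; apply: addr_ge0; [exact: ltW|].
    by apply: mulr_ge0; exact: ltW.
  have e2 : c / 4 * Phi K * q <= k%:R * (ph * q * Phi K) by apply: ar_e2.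
  apply: (le_trans e1); apply: (le_trans e2); apply: (le_trans hsum); exact: hA.
-
  have hq : q <= 8 * (eps0 + A) / (eps0 * c) * bb.
    by apply: (ar_bad (ph := ph) (k := k%:R) (Bs := Bsum)).
  exact: ar_final.
Qed.
End Fiber.



Lemma main_n (R : realType) (T : finType) (V : eqType) (P : T -> R)
  (Q : {ffun T -> T} -> R) (L : T -> R) (uu : T -> int) (vv : T -> V)
  (hP : is_pmf P) (hQ : is_pmf Q) (Phi : R -> R) (mu : R)
  (hPhi0 : forall x, 0 <= x -> 0 <= Phi x)
  (hPhiconv : convex_nonneg Phi) (hPhimono : nondecr_nonneg Phi)
  (eps0 A D : R) (heps0 : 0 < eps0) (hA0 : 0 <= A)
  (hA1 : 1 - D <= Pr P (fun z => eps0 <= condE_R Q L z - L z))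
  (hA2 : forall z f, 0 < P z -> 0 < Q f -> - A <= L (f z) - L z)
  (Vn : pred V) (un : V -> int) (mn : V -> nat)
  (hVn : forall v, Vn v -> 0 < Pr P (fun z => vv z == v))
  (hUn : forall v (u : int), Vn v -> un v < u <= un v + (mn v)%:Z ->
     0 < Pr P (fun z => (uu z == u) && (vv z == v)))
  (hA3 : forall v (u : int), Vn v -> un v < u <= un v + (mn v)%:Z ->
     forall z', pushR Q (condlaw P (fun z => (uu z == u) && (vv z == v))) z'
       = condlaw P (fun z => (uu z == u + 1) && (vv z == v)) z')
  (c : R) (hc : 0 < c) (phi : V -> R)
  (hA4 : forall v, Vn v ->
     [/\ 0 < phi v,
         (forall u : int, un v < u <= un v + (mn v)%:Z ->
            phi v <= Pr P (fun z => (uu z == u) && (vv z == v)) / Pr P (fun z => vv z == v))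
       & c / phi v <= (mn v)%:R])
  (hS : sup [set phi v | v in [set v | Vn v]] <= c / 2) (hne : exists v, Vn v) :
  0 <= Phi (eps0 * c / (16 * sup [set phi v | v in [set v | Vn v]])) /\
  c / 4 * Phi (eps0 * c / (16 * sup [set phi v | v in [set v | Vn v]]))
    * (Pr P (fun z => Vn (vv z)) - 8 * (eps0 + A) / (eps0 * c) * D)
  <= Exp P (fun z => Phi `|L z - mu|).
Proof.
set S := sup _.
set K := eps0 * c / (16 * S).
set M := 8 * (eps0 + A) / (eps0 * c).
have P0 : forall z, 0 <= P z by case: hP.
have hub : has_ubound [set phi v | v in [set v | Vn v]].
  exists (\sum_z `|phi (vv z)|) => x [v /= Vv <-].
  have [z /eqP Hz|H] := pickP (fun z => vv z == v).
    rewrite -Hz; apply: le_trans (ler_norm _) _.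
    rewrite (bigD1 z) //= lerDl; apply: sumr_ge0 => *; exact: normr_ge0.
  have E : \sum_(z | vv z == v) P z = 0 by apply: big_pred0.
  by move: (hVn _ Vv); rewrite /Pr E ltxx.
have phiS v : Vn v -> phi v <= S.
  by move=> Vv; apply: ub_le_sup => //; exists v.
set b := fun z => ((~~ (eps0 <= condE_R Q L z - L z)) : bool)%:R : R.
have b0 z : 0 <= b z by rewrite /b; case: (~~ _).
have Pbad : \sum_z P z * b z <= D.
  have H1 : \sum_z P z = 1 by case: hP.
  rewrite (bigID (fun z => eps0 <= condE_R Q L z - L z)) /= in H1.
  have -> : \sum_z P z * b z = \sum_(z | ~~ (eps0 <= condE_R Q L z - L z)) P z.
    by rewrite [RHS]big_mkcond /=; apply: eq_bigr => z _; rewrite /b; case: (~~ _); rewrite ?mulr1 ?mulr0.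
  move: hA1; rewrite /Pr; lra.
have M0 : 0 <= M.
  apply: divr_ge0; first lra.
  by apply: mulr_ge0; apply: ltW.
set q := fun v => \sum_(z' | vv z' == v) P z'.
set G := fun z => Phi `|L z - mu|.
have G0 z : 0 <= G z by apply: hPhi0.
have fib z : Vn (vv z) ->
   c / 4 * Phi K * (1 - M * ((\sum_(z' | vv z' == vv z) P z' * b z') / q (vv z)))
   <= (\sum_(z' | vv z' == vv z) P z' * G z') / q (vv z).
  move=> Vv; set v := vv z in Vv *.
  have [ph0 hphu hm] := hA4 v Vv.
  have qpos : 0 < q v by exact: hVn.
  apply: ar_step3 => //.
  have := @fiber R T V P Q L uu vv hP hQ Phi mu hPhi0 hPhiconv hPhimono eps0 A heps0 hA0 hA2
    v (un v) (mn v) (fun u => hUn v u Vv) (fun u => hA3 v u Vv) c (phi v) hc ph0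
    (le_trans (phiS v Vv) hS) hphu hm K.
  apply.
  - apply: divr_ge0; first by apply: mulr_ge0; apply: ltW.
    by apply: mulr_ge0 => //; apply: le_trans (ltW ph0) (phiS v Vv).
  - apply: ar_Kdiv => //; last exact: phiS.
    by apply: mulr_ge0; apply: ltW.
have PK0 : 0 <= Phi K.
  apply: hPhi0; rewrite /K.
  have [v Vv] := hne; have [ph0 _ _] := hA4 v Vv.
  have S0 : 0 < S by apply: lt_le_trans ph0 (phiS v Vv).
  apply: divr_ge0; first by apply: mulr_ge0; exact: ltW.
  by apply: mulr_ge0; [|exact: ltW].
set a := c / 4 * Phi K.
have a0 : 0 <= a.
  by apply: mulr_ge0; first by apply: divr_ge0; [exact: ltW|].
split; first exact: PK0.
set ind := fun z => ((Vn (vv z)) : bool)%:R : R.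
have ind01 z : 0 <= ind z <= 1 by rewrite /ind; case: (Vn (vv z)); rewrite /= ?lexx ?ler01.
have fibeq (h : T -> R) z : \sum_(z' | vv z' == vv z) P z' * (ind z' * h z')
     = ind z * \sum_(z' | vv z' == vv z) P z' * h z'.
  rewrite mulr_sumr; apply: eq_bigr => z' /eqP Hz.
  by rewrite /ind Hz mulrCA.
have e1 : \sum_z P z * (ind z * G z) <= Exp P (fun z => Phi `|L z - mu|).
  apply: ler_sum => z _; apply: ler_wpM2l => //.
  have := ind01 z; have := G0 z; move=> g0 /andP[i0 i1].
  by have := ler_wpM2r g0 i1; rewrite mul1r.
have e2 := @avg_id R T V P (fun z => ind z * G z) vv P0.
have e3 : \sum_z P z * (ind z * (a * (1 - M * ((\sum_(z' | vv z' == vv z) P z' * b z') / q (vv z)))))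
    <= \sum_z P z * ((\sum_(z' | vv z' == vv z) P z' * (ind z' * G z')) / \sum_(z' | vv z' == vv z) P z').
  apply: ler_sum => z _; apply: ler_wpM2l => //.
  rewrite (fibeq G z) /ind; case E: (Vn (vv z)).
    by rewrite !mul1r; apply: fib.
  by rewrite !mul0r.
have e5 : \sum_z P z * (ind z * ((\sum_(z' | vv z' == vv z) P z' * b z') / q (vv z)))
    = \sum_z P z * (ind z * b z).
  rewrite (@avg_id R T V P (fun z => ind z * b z) vv P0); apply: eq_bigr => z _.
  congr (_ * _); rewrite (fibeq b z) mulrA; reflexivity.
have e6 : \sum_z P z * (ind z * b z) <= D.
  apply: le_trans Pbad; apply: ler_sum => z _; apply: ler_wpM2l => //.
  have := ind01 z; have := b0 z; move=> g0 /andP[i0 i1].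
  by rewrite -{2}(mul1r (b z)); apply: ler_wpM2r.
have e4 : \sum_z P z * (ind z * (a * (1 - M * ((\sum_(z' | vv z' == vv z) P z' * b z') / q (vv z)))))
   = a * (Pr P (fun z => Vn (vv z)) - M * \sum_z P z * (ind z * ((\sum_(z' | vv z' == vv z) P z' * b z') / q (vv z)))).
  rewrite Pr_ind mulrBr mulr_sumr mulr_sumr mulr_sumr -sumrB; apply: eq_bigr => z _.
  rewrite /ind; ring.
rewrite e5 in e4.
apply: le_trans e1; rewrite e2; apply: le_trans e3; rewrite e4.
apply: ler_wpM2l => //.
have : M * \sum_z P z * (ind z * b z) <= M * D by apply: ler_wpM2l.
lra.
Qed.


Theorem theorem2p1
  (R : realType) (Zt : nat -> finType)
  (* law of Z on Z_n *)
  (P : forall n, Zt n -> R) (hP : forall n, is_pmf (P n))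
  (* law of the random transformation (a random map Z_n -> Z_n) *)
  (Q : forall n, {ffun Zt n -> Zt n} -> R) (hQ : forall n, is_pmf (Q n))
  (L : forall n, Zt n -> R)
  (d : nat) (uu : forall n, Zt n -> int) (vv : forall n, Zt n -> 'rV[int]_d)
  (Phi : R -> R) (mu : nat -> R)
  (hPhi0 : forall x, 0 <= x -> 0 <= Phi x)
  (hPhiconv : convex_nonneg Phi) (hPhimono : nondecr_nonneg Phi)
  (* (A1) *)
  (eps0 : R) (Delta : nat -> R) (heps0 : 0 < eps0)
  (hDelta : Delta n @[n --> \oo] --> 0)
  (hA1 : forall n,
     1 - Delta n <= Pr (P n) (fun z =>
        eps0 <= condE_R (Q n) (L n) z - L n z))
  (* (A2) *)
  (A : R)
  (hA2 : forall n (z : Zt n) (f : {ffun Zt n -> Zt n}),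
     0 < P n z -> 0 < Q n f -> - A <= L n (f z) - L n z)
  (* (A3) *)
  (Vn : nat -> pred 'rV[int]_d) (un : nat -> 'rV[int]_d -> int)
  (mn : nat -> 'rV[int]_d -> nat)
  (hVn : forall n v, Vn n v -> 0 < Pr (P n) (fun z => vv n z == v))
  (hUn : forall n v (u : int), Vn n v ->
     un n v < u <= un n v + (mn n v)%:Z ->
     0 < Pr (P n) (fun z => (uu n z == u) && (vv n z == v)))
  (hA3 : forall n v (u : int), Vn n v ->
     un n v < u <= un n v + (mn n v)%:Z ->
     forall z',
       pushR (Q n) (condlaw (P n) (fun z => (uu n z == u) && (vv n z == v))) z'
       = condlaw (P n) (fun z => (uu n z == u + 1) && (vv n z == v)) z')
  (* (A4) with c(v) = c constant *)
  (c : R) (hc : 0 < c) (phi : nat -> 'rV[int]_d -> R)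
  (hA4 : exists n1 : nat, forall n v, (n1 <= n)%N -> Vn n v ->
     [/\ 0 < phi n v,
         (forall u : int, un n v < u <= un n v + (mn n v)%:Z ->
            phi n v <= Pr (P n) (fun z => (uu n z == u) && (vv n z == v))
                       / Pr (P n) (fun z => vv n z == v))
       & c / phi n v <= (mn n v)%:R])
  (* varphi(n) := sup_{v in V_n} phi_v(n) tends to 0 *)
  (hphi : sup [set phi n v | v in [set v | Vn n v]] @[n --> \oo] --> 0)
  (* P(V in V_n) >= b_o eventually *)
  (b0 : R) (hb0 : 0 < b0)
  (hb : exists N : nat, forall n, (N <= n)%N ->
     b0 <= Pr (P n) (fun z => Vn n (vv n z))) :
  forall co : R, 0 < co < b0 * c / 8 ->
  exists N : nat, forall n, (N <= n)%N ->
    Phi (eps0 * c / (16 * sup [set phi n v | v in [set v | Vn n v]])) * co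
    <= Exp (P n) (fun z => Phi `|L n z - mu n|).
Proof.
move=> co hco.
have [co0 co1] : 0 < co /\ co < b0 * c / 8 by move/andP: hco.
set A' := Num.max A 0.
have hA0' : 0 <= A' by rewrite le_max lexx orbT.
have hAA : - A' <= - A by rewrite lerN2 le_max lexx.
have hA2' : forall n (z : Zt n) (f : {ffun Zt n -> Zt n}),
     0 < P n z -> 0 < Q n f -> - A' <= L n (f z) - L n z.
  by move=> n z f Pz Qf; apply: le_trans hAA (hA2 n z f Pz Qf).
set M := 8 * (eps0 + A') / (eps0 * c).
have M0 : 0 < M.
  apply: divr_gt0; last by apply: mulr_gt0.
  have : 0 < eps0 + A' by apply: ltr_wpDr.
  by move=> h; apply: mulr_gt0.
set dl := (b0 - 4 * co / c) / M.
have dl0 : 0 < dl by apply: ar_delta_pos.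
have [Nd _ HNd] : \forall n \near \oo, `|0 - Delta n| <= dl.
  by move/cvgrPdist_le : hDelta => /(_ dl dl0).
have hc2 : 0 < c / 2 by apply: divr_gt0.
have [Ns _ HNs] : \forall n \near \oo, `|0 - sup [set phi n v | v in [set v | Vn n v]]| <= c / 2.
  by move/cvgrPdist_le : hphi => /(_ (c / 2) hc2).
have [n1 H4] := hA4.
have [Nb Hb] := hb.
exists (maxn (maxn Nd Ns) (maxn n1 Nb)) => n Hn.
have hnd : (Nd <= n)%N by apply: leq_trans Hn; rewrite !leq_max leqnn.
have hns : (Ns <= n)%N by apply: leq_trans Hn; rewrite !leq_max leqnn orbT.
have hn1 : (n1 <= n)%N by apply: leq_trans Hn; rewrite !leq_max leqnn !orbT.
have hnb : (Nb <= n)%N by apply: leq_trans Hn; rewrite !leq_max leqnn !orbT.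
have hD : Delta n <= dl.
  by have := HNd n hnd; rewrite sub0r normrN; apply: le_trans; exact: ler_norm.
have hS : sup [set phi n v | v in [set v | Vn n v]] <= c / 2.
  by have := HNs n hns; rewrite sub0r normrN; apply: le_trans; exact: ler_norm.
have hbn := Hb n hnb.
have hne : exists v, Vn n v.
  have [z Hz|H] := pickP (fun z => Vn n (vv n z)); first by exists (vv n z).
  have E : Pr (P n) (fun z => Vn n (vv n z)) = 0 by apply: big_pred0.
  move: hbn; rewrite E => h; have : b0 < b0 by apply: le_lt_trans h hb0.
  by rewrite ltxx.
have [PK0 key] := @main_n R (Zt n) _ (P n) (Q n) (L n) (uu n) (vv n) (hP n) (hQ n) Phi (mu n)
  hPhi0 hPhiconv hPhimono eps0 A' (Delta n) heps0 hA0' (hA1 n) (hA2' n)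
  (Vn n) (un n) (mn n) (hVn n) (hUn n) (hA3 n) c hc (phi n)
  (fun v Vv => H4 n v hn1 Vv) hS hne.
apply: (ar_concl (c := c) (Pr := Pr (P n) (fun z => Vn n (vv n z))) (b0 := b0) (M := M) (X := Delta n) (D := Delta n)) => //.
- exact: ltW.
- exact: ar_delta.
Qed.
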